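(* Let $(R,\mathfrak m)$ be a noetherian local ring, $\nu$ a valuation centered on $R$, and assume $I=\mathrm{Nil}(R)$ is the only associated prime ideal of $R$. Fix $n\ge1$ and take $y_1,\ldots,y_{r+s}\in I^n$ whose images generate $I^n/I^{n+1}$ as an $R_{\rm red}$-module. Let $b\in R\setminus I$ and let $\pi:R\to R^{(1)}$ be the local blowing up with respect to $\nu$ along $(b,y_1,\ldots,y_r)$. Set $y_i^{(1)}=\pi(y_i)/b$ for $1\le i\le r$ and $y^{(1)}_{r+k}=\pi(y_{r+k})$ for $1\le k\le s$. Then, with $I_{(1)}=\mathrm{Nil}(R^{(1)})$, the images of $y_1^{(1)},\ldots,y_{r+s}^{(1)}$ in $I_{(1)}^n/I_{(1)}^{n+1}$ generate this $(R^{(1)})_{\rm red}$-module.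
   Context: All rings are commutative noetherian with $1$; $\mathrm{Nil}(A)$ is the nilradical of $A$ and $A_{\rm red}=A/\mathrm{Nil}(A)$. A valuation on a ring $R$ is a map $\nu:R\to\Gamma\cup\{\infty\}$ ($\Gamma$ an ordered abelian group) with $\nu(ab)=\nu(a)+\nu(b)$, $\nu(a+b)\ge\min\{\nu(a),\nu(b)\}$, $\nu(1)=0$, $\nu(0)=\infty$, whose support $\mathrm{supp}(\nu)=\{a:\nu(a)=\infty\}$ is a minimal prime ideal; it extends to localizations at multiplicative sets disjoint from the support via $\nu(a/s)=\nu(a)-\nu(s)$ and restricts to subrings, implicitly. $\nu$ has a center on $R$ if $\nu\ge0$ on $R$; its center is $\mathfrak C_\nu(R)=\{a:\nu(a)>0\}$. $\nu$ is centered on $(R,\mathfrak m)$ if $\nu\ge0$ on $R$ and $\nu>0$ on $\mathfrak m$. Local blowing up: for $b\in R\setminus\mathrm{supp}(\nu)$ let $J(b)=\bigcup_{i\ge1}\mathrm{ann}_R(b^i)$, so $R/J(b)\subseteq R_b$. Given $a_1,\ldots,a_r\in R$ with $\nu(a_i)\ge\nu(b)$, let $R'=(R/J(b))[a_1/b,\ldots,a_r/b]\subseteq R_b$ and $R^{(1)}=R'_{\mathfrak C_\nu(R')}$; the canonical map $R\to R^{(1)}$ is the local blowing up of $R$ with respect to $\nu$ along $(b,a_1,\ldots,a_r)$. (Here $\mathrm{supp}(\nu)=I$, $J(b)=0$, and $\nu(y_i)=\infty$ since $y_i$ is nilpotent.) *)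

(* Defs.v *)
From HB Require Import structures.
From mathcomp Require Import all_boot all_order all_algebra.
Set Implicit Arguments. Unset Strict Implicit. Unset Printing Implicit Defensive.
Import Order.TTheory GRing.Theory Num.Theory.
Local Open Scope ring_scope.

Section Ideals.
Variable R : comPzRingType.

Definition is_ideal (P : R -> Prop) : Prop :=
  [/\ P 0, (forall x y, P x -> P y -> P (x + y)) & (forall a x, P x -> P (a * x))].

Definition is_unit (x : R) : Prop := exists y, x * y = 1.

Definition prime_ideal (P : R -> Prop) : Prop :=
  [/\ is_ideal P, ~ P 1 & forall a b, P (a * b) -> P a \/ P b].

Definition minimal_prime (P : R -> Prop) : Prop :=
  prime_ideal P /\
  forall Q, prime_ideal Q -> (forall x, Q x -> P x) -> forall x, P x -> Q x.

Definition noetherian : Prop :=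
  forall I : nat -> R -> Prop, (forall k, is_ideal (I k)) ->
    (forall k x, I k x -> I k.+1 x) ->
    exists N, forall k x, (N <= k)%N -> I k x -> I N x.

Definition local_ring (m : R -> Prop) : Prop :=
  [/\ is_ideal m, ~ m 1 & forall x, ~ m x -> is_unit x].

Definition nilrad : R -> Prop := fun x => exists k, x ^+ k = 0.

Definition associated_prime (P : R -> Prop) : Prop :=
  prime_ideal P /\ exists x, forall a, P a <-> a * x = 0.

Definition ideal_mul (J K : R -> Prop) : R -> Prop := fun z =>
  exists s : seq (R * R), (forall p, p \in s -> J p.1 /\ K p.2) /\
                          z = \sum_(p <- s) p.1 * p.2.

Fixpoint ideal_pow (J : R -> Prop) (n : nat) : R -> Prop :=
  match n with
  | 0 => fun _ => True
  | n'.+1 => ideal_mul (ideal_pow J n') J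
  end.

End Ideals.

(* Ordered abelian groups and valuations; infinity is None *)
Section Valuations.
Variables (G : zmodType) (le : rel G).

Definition ordered_group : Prop :=
  [/\ (forall x, le x x), (forall x y, le x y -> le y x -> x = y),
      (forall x y z, le x y -> le y z -> le x z),
      (forall x y, le x y \/ le y x) &
      (forall x y z, le x y -> le (x + z) (y + z))].

Definition ole (u v : option G) : Prop :=
  match u, v with
  | _, None => True
  | None, Some _ => False
  | Some a, Some b => le a b
  end.

Definition olt (u v : option G) : Prop := ole u v /\ u <> v.

Definition oadd (u v : option G) : option G :=
  match u, v with
  | Some a, Some b => Some (a + b)
  | _, _ => None
  end.

Definition omuln (u : option G) (k : nat) : option G := iter k (oadd u) (Some 0).

Definition is_valuation (R : comPzRingType) (nu : R -> option G) : Prop :=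
  [/\ (forall a b, nu (a * b) = oadd (nu a) (nu b)),
      (forall a b, ole (nu a) (nu (a + b)) \/ ole (nu b) (nu (a + b))),
      nu 1 = Some 0, nu 0 = None &
      minimal_prime (fun a => nu a = None)].

Definition centered_on (R : comPzRingType) (nu : R -> option G) (m : R -> Prop) : Prop :=
  (forall a, ole (Some 0) (nu a)) /\ (forall a, m a -> olt (Some 0) (nu a)).
End Valuations.

Definition is_localization (A B : comPzRingType) (f : {rmorphism A -> B})
  (Sg : A -> Prop) : Prop :=
  [/\ (forall s, Sg s -> is_unit (f s)),
      (forall z, exists a s, Sg s /\ z * f s = f a) &
      (forall a, f a = 0 -> exists s, Sg s /\ s * a = 0)].

(* f, defined on the subring Rp of A, is a ring map Rp -> B which is a
   localization of Rp at Sg (a multiplicative subset of Rp) *)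
Definition is_localization_on (A B : comPzRingType) (Rp : A -> Prop)
  (f : A -> B) (Sg : A -> Prop) : Prop :=
  [/\ f 1 = 1,
      (forall x y, Rp x -> Rp y -> f (x + y) = f x + f y /\ f (x * y) = f x * f y),
      (forall s, Sg s -> is_unit (f s)),
      (forall z, exists a s, [/\ Rp a, Sg s & z * f s = f a]) &
      (forall a, Rp a -> f a = 0 -> exists s, Sg s /\ s * a = 0)].

Inductive gen_subring (A B : comPzRingType) (f : A -> B) (gens : B -> Prop) : B -> Prop :=
| gs_base a : gen_subring f gens (f a)
| gs_gen x : gens x -> gen_subring f gens x
| gs_add x y : gen_subring f gens x -> gen_subring f gens y -> gen_subring f gens (x + y)
| gs_mul x y : gen_subring f gens x -> gen_subring f gens y -> gen_subring f gens (x * y).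

(* Local blowing up of R w.r.t. nu along (b, a_1, ..., a_r):
   iota : R -> T is R -> R_b (binv = 1/b in T); R' is the subring of T
   generated by iota(R) = R/J(b) and the a_i/b; C is the center of nu on R'
   (nu extended to R_b by nu(c/b^k) = nu(c) - k nu(b)); phi : R' -> S is the
   localization R' -> R'_C = R^(1).  The blowing up map is phi \o iota. *)
Definition local_blowup (G : zmodType) (le : rel G) (R : comPzRingType)
  (nu : R -> option G) (b : R) (r : nat) (a : 'I_r -> R)
  (T : comPzRingType) (iota : {rmorphism R -> T}) (binv : T)
  (S : comPzRingType) (phi : T -> S) : Prop :=
  nu b <> None /\ (forall i, ole le (nu b) (nu (a i))) /\
  is_localization iota (fun x => exists k, x = b ^+ k) /\ iota b * binv = 1 /\
  let Rp := gen_subring iota (fun x => exists i, x = iota (a i) * binv) in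
  let C := fun x => exists c k, x * iota b ^+ k = iota c /\
                                olt le (omuln (nu b) k) (nu c) in
  is_localization_on Rp phi (fun x => Rp x /\ ~ C x).

(* Main.v *)
Require Import Defs.
From HB Require Import structures.
From mathcomp Require Import all_boot all_order all_algebra.
From mathcomp Require Import ring.
Set Implicit Arguments. Unset Strict Implicit. Unset Printing Implicit Defensive.
Import Order.TTheory GRing.Theory Num.Theory.
Local Open Scope ring_scope.

Section Gen.
Variable A : comPzRingType.

Lemma nilradD (x y : A) : nilrad x -> nilrad y -> nilrad (x + y).
Proof.
case=> i hx [j hy]; exists (i + j)%N; rewrite exprDn big1 // => k _.
have [lt|ge] := ltnP k j.
  rewrite -addnBA; last by apply: ltnW.
  by rewrite exprD hx !mul0r mul0rn.
by rewrite -(subnK ge) exprD hy !mulr0 mul0rn.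
Qed.

Lemma nilradM (a x : A) : nilrad x -> nilrad (a * x).
Proof. by case=> k hk; exists k; rewrite exprMn hk mulr0. Qed.

Lemma nilrad_ideal : is_ideal (@nilrad A).
Proof. split; [by exists 1%N; rewrite expr1|exact: nilradD|exact: nilradM]. Qed.

Lemma ideal_mul_ideal (J K : A -> Prop) : is_ideal K -> is_ideal (ideal_mul J K).
Proof.
case=> K0 KD KM; split.
- by exists [::]; split => //; rewrite big_nil.
- move=> x z [s1 [h1 ->]] [s2 [h2 ->]]; exists (s1 ++ s2); split; last by rewrite big_cat.
  by move=> p; rewrite mem_cat => /orP[]; [apply: h1|apply: h2].
- move=> a x [s1 [h1 ->]]; exists (map (fun p => (p.1, a * p.2)) s1); split.
    move=> p /mapP[q qin ->] /=; have [] := h1 q qin; split => //; exact: KM.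
  by rewrite big_map mulr_sumr; apply: eq_bigr => p _; rewrite /= mulrCA.
Qed.

Lemma ideal_pow_ideal (J : A -> Prop) k : is_ideal J -> is_ideal (ideal_pow J k).
Proof. by case: k => [|k] hJ; [split|apply: ideal_mul_ideal]. Qed.

Lemma ideal_sub (P : A -> Prop) x z : is_ideal P -> P x -> P z -> P (x - z).
Proof.
case=> _ PD PM hx hz; apply: PD => //.
by rewrite -mulN1r; apply: PM.
Qed.

Lemma ideal_pow1 (J : A -> Prop) x : is_ideal J -> ideal_pow J 1 x -> J x.
Proof.
case=> J0 JD JM [s1 [h1 ->]]; elim: s1 h1 => [|p s1 IH] h1; first by rewrite big_nil.
rewrite big_cons; apply: JD; first by apply: JM; have [] := h1 p (mem_head _ _).
by apply: IH => q qin; apply: h1; rewrite in_cons qin orbT.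
Qed.

Lemma ideal_pow_single (J : A -> Prop) k q q' :
  ideal_pow J k q -> J q' -> ideal_pow J k.+1 (q * q').
Proof.
move=> hq hq'; exists [:: (q, q')]; split; last by rewrite big_cons big_nil addr0.
by move=> p; rewrite inE => /eqP ->.
Qed.
Lemma ideal_powS_sub (J : A -> Prop) k x : is_ideal J -> ideal_pow J k.+1 x -> J x.
Proof.
case=> J0 JD JM [s1 [h1 ->]]; elim: s1 h1 => [|p s1 IH] h1; first by rewrite big_nil.
rewrite big_cons; apply: JD; first by apply: JM; have [] := h1 p (mem_head _ _).
by apply: IH => q qin; apply: h1; rewrite in_cons qin orbT.
Qed.

Lemma nilradN (x : A) : nilrad x -> nilrad (- x).
Proof. by move=> h; rewrite -mulN1r; apply: nilradM. Qed.

Lemma nilrad_sum (I : Type) (l : seq I) (F : I -> A) :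
  (forall i, nilrad (F i)) -> nilrad (\sum_(i <- l) F i).
Proof.
move=> h; apply: (big_ind (@nilrad A)) => //; first by exists 1%N; rewrite expr1.
exact: nilradD.
Qed.
End Gen.

Section Main.
Variables (R : comNzRingType) (G : zmodType) (le : rel G) (nu : R -> option G)
  (n r s : nat) (y : 'I_(r + s) -> R) (b : R)
  (T : comPzRingType) (iota : {rmorphism R -> T}) (binv : T)
  (R1 : comPzRingType) (phi : T -> R1).

Definition Rp := gen_subring iota (fun x => exists i, x = iota (y (lshift s i)) * binv).
Definition Cn := fun x => exists c k, x * iota b ^+ k = iota c /\
                                olt le (omuln (nu b) k) (nu c).

Hypothesis Hval : is_valuation le nu.
Hypothesis Hassoc : forall P : R -> Prop, associated_prime P <-> (forall x, P x <-> nilrad x).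
Hypothesis Hn : (1 <= n)%N.
Hypothesis Hy : forall i, ideal_pow (@nilrad R) n (y i).
Hypothesis Hgen : forall z, ideal_pow (@nilrad R) n z ->
     exists c : 'I_(r + s) -> R,
       ideal_pow (@nilrad R) n.+1 (z - \sum_i c i * y i).
Hypothesis Hnub : nu b <> None.
Hypothesis Hloc : is_localization iota (fun x => exists k, x = b ^+ k).
Hypothesis Hbinv : iota b * binv = 1.
Hypothesis Hphi1 : phi 1 = 1.
Hypothesis HphiDM : forall x y, Rp x -> Rp y -> phi (x + y) = phi x + phi y /\ phi (x * y) = phi x * phi y.
Hypothesis Hunit : forall t, Rp t /\ ~ Cn t -> is_unit (phi t).
Hypothesis Hsurj : forall z, exists a t, [/\ Rp a, Rp t /\ ~ Cn t & z * phi t = phi a].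
Hypothesis Hker : forall a, Rp a -> phi a = 0 -> exists t, (Rp t /\ ~ Cn t) /\ t * a = 0.

Definition f x := phi (iota x).
Definition g (i : 'I_r) := phi (iota (y (lshift s i)) * binv).
Definition y1 (i : 'I_(r + s)) :=
    if (i < r)%N then phi (iota (y i) * binv) else phi (iota (y i)).

Lemma RpB a : Rp (iota a). Proof. exact: gs_base. Qed.
Lemma RpG i : Rp (iota (y (lshift s i)) * binv). Proof. by apply: gs_gen; exists i. Qed.

Lemma phi0 : phi 0 = 0.
Proof.
have := (HphiDM (RpB 0) (RpB 0)).1; rewrite rmorph0 addr0 => h.
by apply: (addIr (phi 0)); rewrite add0r -h.
Qed.

Lemma RpM x z : Rp x -> Rp z -> Rp (x * z). Proof. exact: gs_mul. Qed.

Lemma phiX w k : Rp w -> phi (w ^+ k) = phi w ^+ k.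
Proof.
move=> hw; elim: k => [|k IH]; first by rewrite !expr0.
have Rk : Rp (w ^+ k).
  by elim: k {IH} => [|k IH]; [rewrite expr0 -(rmorph1 iota); apply: RpB|rewrite exprS; apply: RpM].
by rewrite exprS (HphiDM hw Rk).2 IH exprS.
Qed.

Lemma fD x z : f (x + z) = f x + f z.
Proof. by rewrite /f rmorphD (HphiDM (RpB _) (RpB _)).1. Qed.
Lemma fM x z : f (x * z) = f x * f z.
Proof. by rewrite /f rmorphM (HphiDM (RpB _) (RpB _)).2. Qed.
Lemma f0 : f 0 = 0. Proof. by rewrite /f rmorph0 phi0. Qed.
Lemma fX x k : f (x ^+ k) = f x ^+ k.
Proof. by rewrite /f rmorphXn phiX //; apply: RpB. Qed.

Lemma decomp a : Rp a -> exists a0 (e : 'I_r -> R1), phi a = f a0 + \sum_i g i * e i.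
Proof.
elim=> [a0|x [i ->]|x x' hx [a0 [e E]] hx' [a0' [e' E']]|x x' hx [a0 [e E]] hx' [a0' [e' E']]].
- exists a0, (fun=> 0); rewrite big1 ?addr0 // => i _; exact: mulr0.
- exists 0, (fun j => (j == i)%:R); rewrite f0 add0r (bigD1 i) //= eqxx mulr1.
  by rewrite big1 ?addr0 // => j /negbTE ->; rewrite mulr0.
- exists (a0 + a0'), (fun i => e i + e' i); rewrite (HphiDM hx hx').1 fD E E'.
  have h : \sum_i g i * (e i + e' i) = \sum_i g i * e i + \sum_i g i * e' i.
    by rewrite -big_split; apply: eq_bigr => i _ /=; rewrite mulrDr.
  rewrite h; ring.
- exists (a0 * a0'), (fun i => f a0 * e' i + e i * phi x').
  rewrite (HphiDM hx hx').2 fM E.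
  have h1 : \sum_i g i * (f a0 * e' i + e i * phi x') =
     f a0 * (\sum_i g i * e' i) + (\sum_i g i * e i) * phi x'.
    rewrite mulr_sumr mulr_suml -big_split; apply: eq_bigr => i _ /=; ring.
  rewrite h1 E'; ring.
Qed.

Lemma omulnSome k : exists h, omuln (nu b) k = Some h.
Proof.
case E: (nu b) => [gb|]; last by [].
elim: k => [|k [h IH]]; first by exists 0.
by exists (gb + h); rewrite /omuln iterS; rewrite /omuln in IH; rewrite IH.
Qed.

Lemma nuX_ne x k : nu x <> None -> exists h, nu (x ^+ k) = Some h.
Proof.
case: Hval => HnuM _ Hnu1 _ _.
case E: (nu x) => [gx|] // _.
elim: k => [|k [h IH]]; first by exists 0; rewrite expr0.
by exists (gx + h); rewrite exprS HnuM E IH.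
Qed.

Lemma supp_nil x : nu x = None -> nilrad x.
Proof.
case: Hval => HnuM _ Hnu1 Hnu0 [_ Hmin].
have Hpr : prime_ideal (@nilrad R) by have [] := (Hassoc (@nilrad R)).2 (fun x => conj id id).
apply: (Hmin _ Hpr) => z [k hk].
case E: (nu z) => [gz|] //.
have E' : nu z <> None by rewrite E.
have [h hh] := nuX_ne k E'.
by rewrite hk Hnu0 in hh.
Qed.

Lemma key a0 : nilrad (f a0) -> nilrad a0.
Proof.
case=> k hk.
have h0 : phi (iota (a0 ^+ k)) = 0 by rewrite -/(f _) fX.
have [t [[Rt nCt] ht]] := Hker (RpB _) h0.
case: Hloc => _ Hl2 Hl3.
have [c [s0 [[j ->] htc]]] := Hl2 t.
have nc : nu c <> None.
  move=> hc; apply: nCt; exists c, j; split; first by rewrite -rmorphXn.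
  have [h ->] := omulnSome j; rewrite hc; by split.
have : iota (c * a0 ^+ k) = 0.
  by rewrite rmorphM -htc mulrAC ht mul0r.
move/Hl3 => [s1 [[i ->] hs]].
case: Hval => HnuM _ _ Hnu0 _.
have := congr1 nu hs; rewrite Hnu0 !HnuM.
have [h1 ->] := nuX_ne i Hnub.
case Ec: (nu c) => [gc|] //.
case Ea: (nu (a0 ^+ k)) => [ga|] // _.
have [m hm] := supp_nil Ea.
by exists (k * m)%N; rewrite exprM.
Qed.

Inductive Good (k : nat) : R1 -> Prop :=
| Good0 : Good k 0
| GoodA u q : ideal_pow (@nilrad R) k q -> Good k (u * f q)
| GoodY u i : Good k (u * g i)
| GoodD x z : Good k x -> Good k z -> Good k (x + z).

Lemma GoodM k a x : Good k x -> Good k (a * x).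
Proof.
elim=> [|u q hq|u i|x1 x2 _ h1 _ h2].
- by rewrite mulr0; apply: Good0.
- by rewrite mulrA; apply: GoodA.
- by rewrite mulrA; apply: GoodY.
- by rewrite mulrDr; apply: GoodD.
Qed.

Lemma Good_sum k (I : Type) (l : seq I) (F : I -> R1) :
  (forall i, Good k (F i)) -> Good k (\sum_(i <- l) F i).
Proof.
move=> h; apply: (big_ind (Good k)) => //; [exact: Good0|exact: GoodD].
Qed.

Lemma GoodMul k x z : Good k x -> Good 1 z -> Good k.+1 (x * z).
Proof.
move=> hx hz; elim: hx => [|u q hq|u i|x1 x2 _ h1 _ h2].
- by rewrite mul0r; apply: Good0.
- elim: hz => [|u' q' hq'|u' i|z1 z2 _ h1 _ h2].
  + by rewrite mulr0; apply: Good0.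
  + have -> : u * f q * (u' * f q') = (u * u') * f (q * q') by rewrite fM; ring.
    apply: GoodA; apply: ideal_pow_single => //.
    exact: (ideal_powS_sub (@nilrad_ideal R) hq').
  + by rewrite mulrA; apply: GoodY.
  + by rewrite mulrDr; apply: GoodD.
- by rewrite mulrAC; apply: GoodY.
- by rewrite mulrDl; apply: GoodD.
Qed.

Lemma nil_g i : nilrad (g i).
Proof.
have [m hm] := ideal_powS_sub (@nilrad_ideal R) (eq_ind _ (fun k => ideal_pow _ k _) (Hy (lshift s i)) _ (esym (prednK Hn))).
exists m; rewrite /g -phiX; last exact: RpG.
by rewrite exprMn -rmorphXn hm rmorph0 mul0r phi0.
Qed.

Lemma Nil1_Good z : nilrad z -> Good 1 z.
Proof.
move=> hz.
have [a [t [Ra [Rt nCt] E]]] := Hsurj z.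
have [v hv] := Hunit (conj Rt nCt).
have [a0 [e Ea]] := decomp Ra.
have Ha0 : nilrad a0.
  apply: key.
  have -> : f a0 = phi a - \sum_i g i * e i by rewrite Ea addrK.
  apply: nilradD; first by rewrite -E mulrC; apply: nilradM.
  apply: nilradN; apply: nilrad_sum => i; rewrite mulrC; apply: nilradM; exact: nil_g.
have -> : z = v * f a0 + \sum_i (e i * v) * g i.
  have -> : z = phi a * v by rewrite -E -mulrA hv mulr1.
  rewrite Ea mulrDl mulr_suml mulrC; congr (_ + _); apply: eq_bigr => i _; ring.
apply: GoodD; last by apply: Good_sum => i; apply: GoodY.
apply: GoodA; rewrite -[a0]mul1r; exact: ideal_pow_single.
Qed.

Lemma Good_pow k z : ideal_pow (@nilrad R1) k.+1 z -> Good k.+1 z.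
Proof.
elim: k z => [|k IH] z [l [hl ->]]; elim: l hl => [|p l IHl] hl;
  rewrite ?big_nil ?big_cons; try exact: Good0.
- apply: GoodD; last by apply: IHl => q qin; apply: hl; rewrite in_cons qin orbT.
  by apply: GoodM; apply: Nil1_Good; have [] := hl p (mem_head _ _).
- apply: GoodD; last by apply: IHl => q qin; apply: hl; rewrite in_cons qin orbT.
  have [h1 h2] := hl p (mem_head _ _).
  by apply: GoodMul; [apply: IH|apply: Nil1_Good].
Qed.

Lemma pow_map k x : ideal_pow (@nilrad R) k x -> ideal_pow (@nilrad R1) k (f x).
Proof.
elim: k x => [//|k IH] x [l [hl ->]].
exists (map (fun p => (f p.1, f p.2)) l); split.
  move=> p /mapP[q qin ->] /=; have [h1 [m hm]] := hl q qin; split; first exact: IH.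
  by exists m; rewrite -fX hm f0.
rewrite big_map (big_morph f fD f0); apply: eq_bigr => p _; exact: fM.
Qed.

Definition Span z := exists c : 'I_(r + s) -> R1,
       ideal_pow (@nilrad R1) n.+1 (z - \sum_i c i * y1 i).

Lemma Span_pow z : ideal_pow (@nilrad R1) n.+1 z -> Span z.
Proof.
move=> h; exists (fun=> 0); rewrite big1 ?subr0 // => i _; exact: mul0r.
Qed.

Lemma pow_ideal1 : is_ideal (ideal_pow (@nilrad R1) n.+1).
Proof. apply: ideal_pow_ideal; exact: nilrad_ideal. Qed.

Lemma Span0 : Span 0.
Proof. by apply: Span_pow; case: pow_ideal1. Qed.

Lemma SpanD x z : Span x -> Span z -> Span (x + z).
Proof.
move=> [c hc] [c' hc']; exists (fun i => c i + c' i).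
have -> : \sum_i (c i + c' i) * y1 i = \sum_i c i * y1 i + \sum_i c' i * y1 i.
  by rewrite -big_split; apply: eq_bigr => i _ /=; rewrite mulrDl.
have -> : x + z - (\sum_i c i * y1 i + \sum_i c' i * y1 i) =
  (x - \sum_i c i * y1 i) + (z - \sum_i c' i * y1 i) by ring.
by case: pow_ideal1 => _ hD _; apply: hD.
Qed.

Lemma SpanM a x : Span x -> Span (a * x).
Proof.
move=> [c hc]; exists (fun i => a * c i).
have -> : a * x - \sum_i a * c i * y1 i = a * (x - \sum_i c i * y1 i).
  by rewrite mulrBr mulr_sumr; congr (_ - _); apply: eq_bigr => i _; rewrite mulrA.
by case: pow_ideal1 => _ _ hM; apply: hM.
Qed.

Lemma Span_sum (I : Type) (l : seq I) (F : I -> R1) :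
  (forall i, Span (F i)) -> Span (\sum_(i <- l) F i).
Proof.
move=> h; apply: (big_ind Span) => //; [exact: Span0|exact: SpanD].
Qed.

Lemma Span_y1 j : Span (y1 j).
Proof.
exists (fun i => (i == j)%:R).
have -> : \sum_i (i == j)%:R * y1 i = y1 j.
  rewrite (bigD1 j) //= eqxx mul1r big1 ?addr0 // => i /negbTE ->; exact: mul0r.
by rewrite subrr; case: pow_ideal1.
Qed.

Lemma Span_fy j : Span (f (y j)).
Proof.
case: (ltnP j r) => hj.
  have -> : f (y j) = f b * y1 j.
    rewrite /y1 hj /f.
    have hR : Rp (iota (y j) * binv).
      apply: gs_gen; exists (Ordinal hj); congr (iota (y _) * _); exact: val_inj.
    by rewrite -(HphiDM (RpB b) hR).2 mulrCA Hbinv mulr1.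
  by apply: SpanM; apply: Span_y1.
have -> : f (y j) = y1 j by rewrite /y1 ltnNge hj.
exact: Span_y1.
Qed.

Lemma Span_fq q : ideal_pow (@nilrad R) n q -> Span (f q).
Proof.
move=> /Hgen [c hc].
have -> : q = (q - \sum_i c i * y i) + \sum_i c i * y i by rewrite subrK.
rewrite fD; apply: SpanD; first by apply: Span_pow; apply: pow_map.
rewrite (big_morph f fD f0); apply: Span_sum => i; rewrite fM; apply: SpanM.
exact: Span_fy.
Qed.

Lemma Good_Span z : Good n z -> Span z.
Proof.
elim=> [|u q hq|u i|x1 x2 _ h1 _ h2].
- exact: Span0.
- by apply: SpanM; apply: Span_fq.
- apply: SpanM; have -> : g i = y1 (lshift s i) by rewrite /y1 /= ltn_ord.
  exact: Span_y1.
- exact: SpanD.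
Qed.

Lemma main_sec z : ideal_pow (@nilrad R1) n z -> Span z.
Proof.
move=> hz; apply: Good_Span; rewrite -(prednK Hn); apply: Good_pow.
by rewrite prednK.
Qed.
End Main.

Theorem mainTheorem16 (R : comNzRingType) (m : R -> Prop)
  (G : zmodType) (le : rel G) (nu : R -> option G)
  (n r s : nat) (y : 'I_(r + s) -> R) (b : R)
  (T : comPzRingType) (iota : {rmorphism R -> T}) (binv : T)
  (R1 : comPzRingType) (phi : T -> R1) :
  noetherian R -> local_ring m ->
  ordered_group le -> is_valuation le nu -> centered_on le nu m ->
  (forall P : R -> Prop, associated_prime P <-> (forall x, P x <-> nilrad x)) ->
  (1 <= n)%N ->
  (forall i, ideal_pow (@nilrad R) n (y i)) ->
  (forall z, ideal_pow (@nilrad R) n z ->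
     exists c : 'I_(r + s) -> R,
       ideal_pow (@nilrad R) n.+1 (z - \sum_i c i * y i)) ->
  ~ nilrad b ->
  local_blowup le nu b (fun i : 'I_r => y (lshift s i)) iota binv phi ->
  let y1 := fun i : 'I_(r + s) =>
    if (i < r)%N then phi (iota (y i) * binv) else phi (iota (y i)) in
  forall z, ideal_pow (@nilrad R1) n z ->
    exists c : 'I_(r + s) -> R1,
      ideal_pow (@nilrad R1) n.+1 (z - \sum_i c i * y1 i).
Proof.
move=> _ _ _ Hval _ Hassoc Hn Hy Hgen _ [Hnub [_ [Hloc [Hbinv Hlo]]]] y1 z hz.
case: Hlo => H1 H2 H3 H4 H5.
exact: (main_sec Hval Hassoc Hn Hy Hgen Hnub Hloc Hbinv H1 H2 H3 H4 H5 hz).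
Qed.
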